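(* A set $\mathcal{O}$ of upwards-closed modalities is decomposable if and only if, for all $r,r'\in TT\mathbf{1}$, whenever $r\preccurlyeq r'$, then for all $o\in\mathcal{O}$, $\mu r\in o(\{*\})$ implies $\mu r'\in o(\{*\})$.
   Context: $\Sigma$ is a signature of effect operations with arities $\alpha^n\to\alpha$, $\mathbf{N}\times\alpha^n\to\alpha$, $\alpha^{\mathbf{N}}\to\alpha$ or $\mathbf{N}\times\alpha^{\mathbf{N}}\to\alpha$. $TX$ is the set of possibly infinite labelled trees with leaves $\bot$ or elements of $X$ and internal nodes labelled by operations (or $\sigma_m$, $m\in\mathbb{N}$) with children according to arity; $t\le t'$ iff $t$ is obtained from $t'$ by replacing subtrees with $\bot$. $\mu:TTX\to TX$ is the monad multiplication, replacing each leaf of a tree of trees by that tree. $\mathbf{1}=\{*\}$. A set $\mathcal{O}$ of modalities is given with $[\![o]\!]\subseteq T\mathbf{1}$; upwards closed means $[\![o]\!]$ is upward closed under $\le$. $t[\in P]\in T\mathbf{1}$ replaces leaves in $P$ by $*$ and other $X$-leaves by $\bot$; $o(A)=\{t\in TX\mid t[\in A]\in[\![o]\!]\}$. $\mathcal{T}$ is the least class of formulas containing $o(\top),o(\bot)$ ($o\in\mathcal{O}$) closed under arbitrary $\bigvee,\bigwedge$, with $[\![o(\top)]\!]=o(\{*\})$, $[\![o(\bot)]\!]=o(\emptyset)$, unions/intersections. On $T\mathbf{1}$: $t\trianglelefteq t'$ iff $\forall\Phi\in\mathcal{T}$, $t\in[\![\Phi]\!]\Rightarrow t'\in[\![\Phi]\!]$.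 On $TT\mathbf{1}$: $r\preccurlyeq r'$ iff $\forall o\,\forall\Phi\in\mathcal{T}$, $r\in o([\![\Phi]\!])\Rightarrow r'\in o([\![\Phi]\!])$. $\mathcal{O}$ is decomposable if for all $r,r'\in TT\mathbf{1}$, $r\preccurlyeq r'$ implies $\mu r\trianglelefteq\mu r'$. *)

(* Defs.v *)
From Stdlib Require Import ClassicalEpsilon.
Set Implicit Arguments.

(* The four admissible arity shapes:
   AFin n    : alpha^n -> alpha
   ANatFin n : N x alpha^n -> alpha
   ANat      : alpha^N -> alpha
   ANatNat   : N x alpha^N -> alpha *)
Inductive arity := AFin (n : nat) | ANatFin (n : nat) | ANat | ANatNat.

Definition param_ty (a : arity) : Type :=
  match a with AFin _ | ANat => unit | ANatFin _ | ANatNat => nat end.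

Definition child_ty (a : arity) : Type :=
  match a with AFin n | ANatFin n => {i : nat | i < n} | ANat | ANatNat => nat end.

(* A signature: operation symbols with their arities; sig_ar m is the
   arity of the extra node labels sigma_m (m in N). *)
Record signature := Signature {
  Op : Type;
  op_ar : Op -> arity;
  sig_ar : nat -> arity
}.

Inductive label (S : signature) : Type :=
| LOp (f : Op S) (p : param_ty (op_ar S f))
| LSig (m : nat).

Definition children (S : signature) (l : label S) : Type :=
  match l with
  | LOp _ f _ => child_ty (op_ar S f)
  | LSig _ m => child_ty (sig_ar S m)
  end.

CoInductive tree (S : signature) (X : Type) : Type :=
| Bot
| Leaf (x : X)
| Node (l : label S) (k : children l -> tree S X).
Arguments Bot {S X}.
Arguments Leaf {S X} x.
Arguments Node {S X} l k.

CoInductive tle {S : signature} {X : Type} : tree S X -> tree S X -> Prop :=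
| tle_bot t : tle Bot t
| tle_leaf x : tle (Leaf x) (Leaf x)
| tle_node l k k' : (forall i, tle (k i) (k' i)) -> tle (Node l k) (Node l k').

CoFixpoint mu {S : signature} {X : Type} (r : tree S (tree S X)) : tree S X :=
  match r with
  | Bot => Bot
  | Leaf t => t
  | Node l k => Node l (fun i => mu (k i))
  end.

CoFixpoint tin {S : signature} {X : Type} (P : X -> Prop) (t : tree S X)
  : tree S unit :=
  match t with
  | Bot => Bot
  | Leaf x => if excluded_middle_informative (P x) then Leaf tt else Bot
  | Node l k => Node l (fun i => tin P (k i))
  end.

Definition modA {S : signature} {X : Type} (semo : tree S unit -> Prop)
  (A : X -> Prop) : tree S X -> Prop :=
  fun t => semo (tin A t).

Definition upward_closed {S : signature} (semo : tree S unit -> Prop) : Prop :=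
  forall t t', tle t t' -> semo t -> semo t'.

Inductive formula (O : Type) : Type :=
| FTop (o : O)
| FBot (o : O)
| FOr (I : Type) (F : I -> formula O)
| FAnd (I : Type) (F : I -> formula O).

Fixpoint fsem {S : signature} {O : Type} (sem : O -> tree S unit -> Prop)
  (phi : formula O) : tree S unit -> Prop :=
  match phi with
  | FTop o => modA (sem o) (fun _ : unit => True)
  | FBot o => modA (sem o) (fun _ : unit => False)
  | FOr F => fun t => exists i, fsem sem (F i) t
  | FAnd F => fun t => forall i, fsem sem (F i) t
  end.

Definition tri {S : signature} {O : Type} (sem : O -> tree S unit -> Prop)
  (t t' : tree S unit) : Prop :=
  forall phi : formula O, fsem sem phi t -> fsem sem phi t'.

Definition prec {S : signature} {O : Type} (sem : O -> tree S unit -> Prop)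
  (r r' : tree S (tree S unit)) : Prop :=
  forall (o : O) (phi : formula O),
    modA (sem o) (fsem sem phi) r -> modA (sem o) (fsem sem phi) r'.

Definition decomposable {S : signature} {O : Type}
  (sem : O -> tree S unit -> Prop) : Prop :=
  forall r r' : tree S (tree S unit), prec sem r r' -> tri sem (mu r) (mu r').

(* Main.v *)
Require Import Defs.
From Stdlib Require Import ClassicalEpsilon.

Definition frob {S X} (t : tree S X) : tree S X :=
  match t with Bot => Bot | Leaf x => Leaf x | Node l k => Node l k end.
Lemma frob_eq {S X} (t : tree S X) : t = frob t. Proof. destruct t; reflexivity. Qed.

CoFixpoint tmap {S X Y} (f : X -> Y) (t : tree S X) : tree S Y :=
  match t with Bot => Bot | Leaf x => Leaf (f x) | Node l k => Node l (fun i => tmap f (k i)) end.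

Lemma tin_node {S X} (P : X -> Prop) (l : label S) (k : children l -> tree S X) :
  tin P (Node l k) = Node l (fun i => tin P (k i)).
Proof. rewrite (frob_eq (tin P (Node l k))). reflexivity. Qed.
Lemma tin_bot {S X} (P : X -> Prop) : tin P (@Bot S X) = Bot.
Proof. rewrite (frob_eq (tin P Bot)). reflexivity. Qed.
Lemma tin_leaf {S X} (P : X -> Prop) x : tin P (@Leaf S X x) =
  if excluded_middle_informative (P x) then Leaf tt else Bot.
Proof. rewrite (frob_eq (tin P (Leaf x))). simpl. destruct excluded_middle_informative; reflexivity. Qed.
Lemma mu_node {S X} (l : label S) (k : children l -> tree S (tree S X)) :
  mu (Node l k) = Node l (fun i => mu (k i)).
Proof. rewrite (frob_eq (mu (Node l k))). reflexivity. Qed.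
Lemma mu_bot {S X} : mu (@Bot S (tree S X)) = Bot.
Proof. rewrite (frob_eq (mu Bot)). reflexivity. Qed.
Lemma mu_leaf {S X} (t : tree S X) : mu (Leaf t) = t.
Proof. rewrite (frob_eq (mu (Leaf t))). simpl. destruct t; reflexivity. Qed.
Lemma tmap_node {S X Y} (f : X -> Y) (l : label S) (k : children l -> tree S X) :
  tmap f (Node l k) = Node l (fun i => tmap f (k i)).
Proof. rewrite (frob_eq (tmap f (Node l k))). reflexivity. Qed.
Lemma tmap_bot {S X Y} (f : X -> Y) : tmap f (@Bot S X) = Bot.
Proof. rewrite (frob_eq (tmap f Bot)). reflexivity. Qed.
Lemma tmap_leaf {S X Y} (f : X -> Y) x : tmap f (@Leaf S X x) = Leaf (f x).
Proof. rewrite (frob_eq (tmap f (Leaf x))). reflexivity. Qed.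

Lemma tle_refl {S X} : forall t : tree S X, tle t t.
Proof. cofix CIH. intros t. destruct t; constructor. intros i. apply CIH. Qed.

Lemma tin_tin {S X} (P : X -> Prop) (Q : unit -> Prop) (R : X -> Prop)
  (H : forall x, (P x /\ Q tt) <-> R x) : forall t : tree S X, tle (tin Q (tin P t)) (tin R t).
Proof. cofix CIH. intros t. destruct t.
- rewrite !tin_bot. constructor.
- rewrite !tin_leaf. destruct (excluded_middle_informative (P x));
  destruct (excluded_middle_informative (R x)); rewrite ?tin_leaf, ?tin_bot; try constructor.
  all: try destruct (excluded_middle_informative (Q tt)); try constructor.
  all: exfalso; firstorder.
- rewrite !tin_node. constructor. intros i. apply CIH.
Qed.

Lemma tin_tin' {S X} (P : X -> Prop) (Q : unit -> Prop) (R : X -> Prop)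
  (H : forall x, (P x /\ Q tt) <-> R x) : forall t : tree S X, tle (tin R t) (tin Q (tin P t)).
Proof. cofix CIH. intros t. destruct t.
- rewrite !tin_bot. constructor.
- rewrite !tin_leaf. destruct (excluded_middle_informative (P x));
  destruct (excluded_middle_informative (R x)); rewrite ?tin_leaf, ?tin_bot; try constructor.
  all: try destruct (excluded_middle_informative (Q tt)); try constructor.
  all: exfalso; firstorder.
- rewrite !tin_node. constructor. intros i. apply CIH.
Qed.

Lemma tin_tmap {S X Y} (f : X -> Y) (P : Y -> Prop) (Q : X -> Prop)
  (H : forall x, P (f x) <-> Q x) : forall t : tree S X, tle (tin P (tmap f t)) (tin Q t).
Proof. cofix CIH. intros t. destruct t.
- rewrite tmap_bot, !tin_bot. constructor.
- rewrite tmap_leaf, !tin_leaf. destruct (excluded_middle_informative (P (f x)));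
  destruct (excluded_middle_informative (Q x)); try constructor.
  all: exfalso; firstorder.
- rewrite tmap_node, !tin_node. constructor. intros i. apply CIH.
Qed.

Lemma tin_tmap' {S X Y} (f : X -> Y) (P : Y -> Prop) (Q : X -> Prop)
  (H : forall x, P (f x) <-> Q x) : forall t : tree S X, tle (tin Q t) (tin P (tmap f t)).
Proof. cofix CIH. intros t. destruct t.
- rewrite tmap_bot, !tin_bot. constructor.
- rewrite tmap_leaf, !tin_leaf. destruct (excluded_middle_informative (P (f x)));
  destruct (excluded_middle_informative (Q x)); try constructor.
  all: exfalso; firstorder.
- rewrite tmap_node, !tin_node. constructor. intros i. apply CIH.
Qed.

Definition FF : unit -> Prop := fun _ => False.
Definition TT : unit -> Prop := fun _ => True.

Lemma muA {S} : forall r : tree S (tree S unit),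
  tle (tin TT (mu (tmap (tin FF) r))) (tin FF (mu r)).
Proof. cofix CIH. intros r. destruct r.
- rewrite tmap_bot, !mu_bot, !tin_bot. constructor.
- rewrite tmap_leaf, !mu_leaf. apply tin_tin. unfold FF, TT. tauto.
- rewrite tmap_node, !mu_node, !tin_node. constructor. intros i. apply CIH.
Qed.

Lemma muA' {S} : forall r : tree S (tree S unit),
  tle (tin FF (mu r)) (tin TT (mu (tmap (tin FF) r))).
Proof. cofix CIH. intros r. destruct r.
- rewrite tmap_bot, !mu_bot, !tin_bot. constructor.
- rewrite tmap_leaf, !mu_leaf. apply tin_tin'. unfold FF, TT. tauto.
- rewrite tmap_node, !mu_node, !tin_node. constructor. intros i. apply CIH.
Qed.

Fixpoint hat {O} (phi : formula O) : formula O :=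
  match phi with
  | FTop o => FBot o
  | FBot o => FBot o
  | FOr F => FOr (fun i => hat (F i))
  | FAnd F => FAnd (fun i => hat (F i))
  end.

Lemma hat_ok {S O} (sem : O -> tree S unit -> Prop)
  (Hup : forall o : O, upward_closed (sem o)) :
  forall phi t, fsem sem phi (tin FF t) <-> fsem sem (hat phi) t.
Proof.
  induction phi as [o|o|I F IH|I F IH]; intros t; simpl; unfold modA.
  - split; intros H; eapply Hup; try exact H.
    + apply tin_tin. unfold FF; tauto.
    + apply tin_tin'. unfold FF; tauto.
  - split; intros H; eapply Hup; try exact H.
    + apply tin_tin. unfold FF; tauto.
    + apply tin_tin'. unfold FF; tauto.
  - split; intros [i Hi]; exists i; apply IH; exact Hi.
  - split; intros Hi i; apply IH; apply Hi.
Qed.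

Theorem lemma4p16 (S : signature) (O : Type) (sem : O -> tree S unit -> Prop)
  (Hup : forall o : O, upward_closed (sem o)) :
  decomposable sem <->
  (forall r r' : tree S (tree S unit), prec sem r r' ->
     forall o : O, modA (sem o) (fun _ : unit => True) (mu r) ->
                   modA (sem o) (fun _ : unit => True) (mu r')).
Proof.
  split.
  - intros D r r' Hp o H. exact (D r r' Hp (FTop o) H).
  - intros C r r' Hp phi. induction phi as [o|o|I F IH|I F IH]; simpl.
    + apply C; assumption.
    + intros H. unfold modA in *.
      assert (Hp' : prec sem (tmap (tin FF) r) (tmap (tin FF) r')).
      { intros o' psi H1. unfold modA in *.
        eapply Hup. apply (tin_tmap' (tin FF) (fsem sem psi) (fsem sem (hat psi))). intros t. apply (hat_ok sem Hup psi t).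
        apply Hp. eapply Hup. apply (tin_tmap (tin FF) (fsem sem psi) (fsem sem (hat psi))). intros t. apply (hat_ok sem Hup psi t).
        exact H1. }
      eapply Hup. apply muA.
      apply (C _ _ Hp' o). unfold modA. eapply Hup. apply muA'. exact H.
    + intros [i Hi]. exists i. apply IH. exact Hi.
    + intros Hi i. apply IH. apply Hi.
Qed.
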